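(* Let $m,n$ be positive integers, let $\bm{D}_0\in\mathbb{R}^{m\times m}$ be invertible, let $\bm{X}_0\in\mathbb{R}^{m\times n}$, and let $\bm{Y}=\bm{D}_0\bm{X}_0$. Let $\Omega\subseteq[m]\times[n]$ be the support of $\bm{X}_0$, and for $i\in[m]$ let $\Omega_i\subseteq[n]$ be the support of the $i$-th row of $\bm{X}_0$, with complement $\Omega_i^c=[n]\setminus\Omega_i$. Consider the problem of finding $\bm{D}\in\mathbb{R}^{m\times m}$ and $\bm{X}\in\mathbb{R}^{m\times n}$ such that $$\bm{Y}=\bm{D}\bm{X}\quad\text{and}\quad \bm{X}_{i,j}=0\ \text{for all }(i,j)\notin\Omega.$$ Say that this problem has a unique solution if every solution is of the form $\bm{D}=\bm{D}_0\bm{S}$, $\bm{X}=\bm{S}^{-1}\bm{X}_0$ for some diagonal matrix $\bm{S}$ with nonzero diagonal entries. If the problem has a unique solution in this sense, then: (1) $n\ge n_0=m+\frac{|\Omega|}{m}-1$; (2) for all $i\in[m]$, $|\Omega_i^c|\ge m-1$; (3) for all $i\in[m]$ and all $i'\in[m]$ with $i'\ne i$, there exists $j\in[n]$ such that $(\bm{X}_0)_{i,j}=0$ and $(\bm{X}_0)_{i',j}\ne 0$.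
   Context: $[n]=\{1,\dots,n\}$. The support of a matrix or row vector is the set of indices of its nonzero entries. *)

(* Defs.v *)
From HB Require Import structures.
From mathcomp Require Import all_boot all_order all_algebra.
From mathcomp Require Import reals.
Set Implicit Arguments. Unset Strict Implicit. Unset Printing Implicit Defensive.
Import Order.TTheory GRing.Theory Num.Theory.
Local Open Scope ring_scope.

Definition supp_mx (R : realType) (m n : nat) (X0 : 'M[R]_(m, n)) : {set 'I_m * 'I_n} :=
  [set ij | X0 ij.1 ij.2 != 0].

Definition supp_row (R : realType) (m n : nat) (X0 : 'M[R]_(m, n)) (i : 'I_m) : {set 'I_n} :=
  [set j | row i X0 0 j != 0].

Definition is_solution (R : realType) (m n : nat) (Y : 'M[R]_(m, n)) (X0 : 'M[R]_(m, n))
  (D : 'M[R]_m) (X : 'M[R]_(m, n)) : Prop :=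
  Y = D *m X /\ (forall i j, (i, j) \notin supp_mx X0 -> X i j = 0).

Definition unique_solution (R : realType) (m n : nat) (D0 : 'M[R]_m) (X0 : 'M[R]_(m, n)) : Prop :=
  forall (D : 'M[R]_m) (X : 'M[R]_(m, n)), is_solution (D0 *m X0) X0 D X ->
    exists s : 'rV[R]_m, (forall i, s 0 i != 0) /\
      D = D0 *m diag_mx s /\ X = invmx (diag_mx s) *m X0.

(* Main.v *)
Require Import Defs.
From HB Require Import structures.
From mathcomp Require Import all_boot all_order all_algebra.
From mathcomp Require Import reals.
From mathcomp Require Import zify lra.
Import Order.TTheory GRing.Theory Num.Theory.
Local Open Scope ring_scope.

Lemma key (R : realType) (m n : nat) (D0 : 'M[R]_m) (X0 : 'M[R]_(m, n))
  (hD0 : D0 \in unitmx) (U : unique_solution D0 X0) (T : 'M[R]_m) :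
  T \in unitmx -> (forall a j, (a, j) \notin supp_mx X0 -> (T *m X0) a j = 0) ->
  forall a k, a != k -> T a k = 0.
Proof.
move=> Tu Hs a k ak.
have [|s [s0 [HD HX]]] := U (D0 *m invmx T) (T *m X0).
  split=> //; by rewrite -mulmxA (mulmxA (invmx T)) mulVmx // mul1mx.
have E : invmx T = diag_mx s.
  by rewrite -(mulKmx hD0 (invmx T)) HD mulKmx.
have : (T *m diag_mx s) a k = (a == k)%:R by rewrite -E mulmxV // mxE.
rewrite mul_mx_diag mxE (negbTE ak) => /eqP; rewrite mulf_eq0 (negbTE (s0 k)) orbF.
by move/eqP.
Qed.

Lemma delta_mulE (R : realType) (m p n : nat) (i a : 'I_m) (k : 'I_p) (A : 'M[R]_(p, n)) j :
  (delta_mx i k *m A) a j = (a == i)%:R * A k j.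
Proof.
rewrite mxE (bigD1 k) //= big1 ?addr0 => [|l lk]; rewrite !mxE ?eqxx ?andbT //.
by rewrite (negbTE lk) andbF mul0r.
Qed.

Lemma mul_deltaE (R : realType) (m p n : nat) (i : 'I_p) (k b : 'I_n) (A : 'M[R]_(m, p)) a :
  (A *m delta_mx i k) a b = A a i * (b == k)%:R.
Proof.
rewrite mxE (bigD1 i) //= big1 ?addr0 => [|l li]; rewrite !mxE ?eqxx //.
by rewrite (negbTE li) mulr0.
Qed.

Lemma claim3 (R : realType) (m n : nat) (D0 : 'M[R]_m) (X0 : 'M[R]_(m, n))
  (hD0 : D0 \in unitmx) (U : unique_solution D0 X0) (i i' : 'I_m) :
  i' != i -> exists j : 'I_n, X0 i j = 0 /\ X0 i' j != 0.
Proof.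
move=> ii.
case: (boolP [exists j, (X0 i j == 0) && (X0 i' j != 0)]).
  by case/existsP=> j /andP [/eqP a b]; exists j.
move/existsPn=> H; exfalso.
have H' : forall j, X0 i j = 0 -> X0 i' j = 0.
  move=> j h; have := H j; rewrite h eqxx /=.
  by move/negPn/eqP.
pose T : 'M[R]_m := 1%:M + delta_mx i i'.
have Tu : T \in unitmx.
  apply: (proj1 (@mulmx1_unit _ _ T (1%:M - delta_mx i i') _)).
  rewrite /T mulmxDl mul1mx mulmxBr mulmx1 mul_delta_mx_cond (negbTE ii) mulr0n.
  by rewrite subr0 subrK.
have ii2 : i != i' by rewrite eq_sym.
have h := @key _ _ _ _ _ hD0 U _ Tu _ _ _ ii2.
have : T i i' = 0.
  apply: h => a j; rewrite inE /= negbK => /eqP a0.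
  rewrite mulmxDl mul1mx mxE a0 add0r delta_mulE.
  by case: (eqVneq a i) => [ai|nai]; [rewrite H' ?mulr0 // -ai | rewrite mul0r].
rewrite /T !mxE eqxx (negbTE ii2) /= add0r.
by rewrite eqxx => /eqP; rewrite oner_eq0.
Qed.

Lemma claim2 (R : realType) (m n : nat) (D0 : 'M[R]_m) (X0 : 'M[R]_(m, n))
  (hD0 : D0 \in unitmx) (U : unique_solution D0 X0) (i : 'I_m) :
  (m - 1 <= #|~: supp_row X0 i|)%N.
Proof.
rewrite leqNgt; apply/negP => Hlt.
set C := ~: supp_row X0 i.
pose f := fun c : 'I_#|C| => (enum_val c : 'I_n).
pose u : 'cV[R]_m := delta_mx i 0.
pose A := row_mx (colsub f X0) u.
have rA : (\rank A < m)%N.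
  apply: leq_ltn_trans (rank_leq_col A) _; move: Hlt; rewrite -/C; lia.
have : kermx A != 0 by rewrite -mxrank_eq0 mxrank_ker subn_eq0 -ltnNge.
case/rowV0Pn => v /sub_kermxP vA v0.
move: vA; rewrite mul_mx_row -row_mx0 => /eq_row_mx [vX vu].
have vi : v 0 i = 0.
  have := congr1 (fun M : 'M[R]_(1,1) => M 0 0) vu; rewrite /u mul_deltaE eqxx mulr1 => ->.
  by rewrite mxE.
have [k vk] : exists k, v 0 k != 0.
  case: (boolP [exists k, v 0 k != 0]) => [/existsP //|/existsPn H].
  by case/eqP: v0; apply/rowP => k; rewrite mxE; apply/eqP; rewrite -[_ == _]negbK H.
have ki : i != k by apply/eqP => e; move: vk; rewrite -e vi eqxx.
pose T := 1%:M + u *m v.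
have Tu : T \in unitmx.
  apply: (proj1 (@mulmx1_unit _ _ T (1%:M - u *m v) _)).
  rewrite /T mulmxDl mul1mx mulmxBr mulmx1 mulmxA -(mulmxA u v u) vu mulmx0 mul0mx.
  by rewrite subr0 subrK.
have h := @key _ _ _ _ _ hD0 U _ Tu _ _ _ ki.
have : T i k = 0.
  apply: h => a j; rewrite inE /= negbK => /eqP a0.
  rewrite mulmxDl mul1mx mxE a0 add0r -mulmxA delta_mulE.
  case: (eqVneq a i) => [ai|nai]; last by rewrite mul0r.
  have jC : j \in C by rewrite !inE mxE -ai a0 eqxx.
  suff -> : (v *m X0) 0 j = 0 by rewrite mulr0.
  rewrite -(enum_rankK_in jC jC).
  have := congr1 (fun M : 'M[R]_(1,_) => M 0 (enum_rank_in jC j)) vX; rewrite !mxE => E.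
  by apply: etrans E; apply: eq_bigr => l _; rewrite !mxE.
rewrite /T /u !mxE (negbTE ki) add0r big_ord1 !mxE !eqxx mul1r.
by apply/eqP.
Qed.

Lemma card_supp (R : realType) (m n : nat) (X0 : 'M[R]_(m, n)) :
  #|supp_mx X0| = (\sum_i #|supp_row X0 i|)%N.
Proof.
rewrite -sum1_card big_mkcond /=.
transitivity (\sum_i \sum_j (if (i, j) \in supp_mx X0 then 1%N else 0%N))%N.
  by rewrite pair_bigA; apply: congr_big => // -[i j].
apply: eq_bigr => i _; rewrite -sum1_card big_mkcond /=.
rewrite [RHS]big_mkcond /=. by apply: eq_bigr => j _; rewrite !inE mxE.
Qed.

Theorem proposition2 (R : realType) (m n : nat) (hm : (0 < m)%N) (hn : (0 < n)%N)
  (D0 : 'M[R]_m) (X0 : 'M[R]_(m, n)) (hD0 : D0 \in unitmx) :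
  unique_solution D0 X0 ->
  [/\ (m%:R + (#|supp_mx X0|)%:R / m%:R - 1 <= (n%:R : R)),
      (forall i : 'I_m, (m - 1 <= #|~: supp_row X0 i|)%N) &
      (forall i i' : 'I_m, i' != i ->
         exists j : 'I_n, X0 i j = 0 /\ X0 i' j != 0)].
Proof.
move=> U; split; [| by move=> i; exact: (@claim2 _ _ _ _ _ hD0 U) | by move=> i i'; exact: (@claim3 _ _ _ _ _ hD0 U)].
have hrow i : (#|supp_row X0 i| <= n - (m - 1))%N.
  have := cardsC (supp_row X0 i); rewrite card_ord.
  have := @claim2 _ _ _ _ _ hD0 U i; lia.
have S : (#|supp_mx X0| <= m * (n - (m - 1)))%N.
  have <- : (\sum_(i < m) (n - (m - 1)))%N = (m * (n - (m - 1)))%N.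
    by rewrite sum_nat_const card_ord.
  by rewrite card_supp; apply: leq_sum => i _; exact: hrow.
have mn : (m - 1 <= n)%N.
  have := @claim2 _ _ _ _ _ hD0 U (Ordinal hm); have := max_card (~: supp_row X0 (Ordinal hm)).
  rewrite card_ord; lia.
have e : n.+1 = ((n - (m - 1)) + m)%N by lia.
have e' : (n%:R + 1 : R) = (n - (m - 1))%:R + m%:R.
  by rewrite -natrD -e -addn1 natrD.
have S' : (#|supp_mx X0|%:R : R) <= m%:R * (n - (m - 1))%:R.
  by rewrite -natrM ler_nat.
have m0 : (0 : R) < m%:R by rewrite ltr0n.
have : (#|supp_mx X0|%:R : R) / m%:R <= (n - (m - 1))%:R.
  by rewrite ler_pdivrMr // mulrC.
lra.
Qed.
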